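(* Let $\Omega$ be a measurable space with reference measure $\mathrm{d}\mathbf{y}$, let $\Theta$ be a parameter set, and for each $\bm{\theta}\in\Theta$ let $f_{\bm{\theta}}(\cdot\mid\cdot):\Omega\times\Omega\to\mathbb{R}$ be such that $0<\int_\Omega\exp\{f_{\bm{\theta}}(\mathbf{y}\mid\mathbf{u})\}\,\mathrm{d}\mathbf{y}<\infty$ for all $\mathbf{u}\in\Omega$. Given a fixed initial point $\mathbf{y}_0\in\Omega$ and observations $\mathbf{y}_1,\ldots,\mathbf{y}_n\in\Omega$, define $$\mathcal{L}(\bm{\theta})=\sum_{t=1}^n\left[f_{\bm{\theta}}(\mathbf{y}_t\mid\mathbf{y}_{t-1})-\log\int_\Omega\exp\{f_{\bm{\theta}}(\mathbf{y}\mid\mathbf{y}_{t-1})\}\,\mathrm{d}\mathbf{y}\right]$$ and, for $\bm{\theta}\in\Theta$ and $\bm{\nu}=(\nu_0,\ldots,\nu_{n-1})\in\mathbb{R}^n$, $$\mathcal{M}(\bm{\theta},\bm{\nu})=\sum_{t=1}^n\{f_{\bm{\theta}}(\mathbf{y}_t\mid\mathbf{y}_{t-1})+\nu_{t-1}\}-\int_\Omega\left[\sum_{t=1}^n\exp\{f_{\bm{\theta}}(\mathbf{y}\mid\mathbf{y}_{t-1})+\nu_{t-1}\}\right]\mathrm{d}\mathbf{y}.$$ Then the set of points $\bm{\theta}^\star\in\operatorname{argmax}_{\bm{\theta}\in\Theta}\mathcal{L}(\bm{\theta})$ coincides with the set of points $\tilde{\bm{\theta}}$ such that $(\tilde{\bm{\theta}},\bm{\nu}^\star)\in\operatorname{argmax}_{\bm{\theta}\in\Theta,\bm{\nu}\in\mathbb{R}^n}\mathcal{M}(\bm{\theta},\bm{\nu})$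 for some $\bm{\nu}^\star\in\mathbb{R}^n$.
   Context: $\mathcal{L}$ is the log-likelihood of a Markov chain with unnormalised transition density $p_{\bm{\theta}}(\mathbf{y}_t\mid\mathbf{y}_{t-1})\propto\exp\{f_{\bm{\theta}}(\mathbf{y}_t\mid\mathbf{y}_{t-1})\}$, the initial point $\mathbf{y}_0$ being treated as a constant. *)

(* Defs.v *)
From HB Require Import structures.
From mathcomp Require Import all_boot all_order all_algebra.
From mathcomp Require Import all_classical all_reals all_analysis.
Set Implicit Arguments. Unset Strict Implicit. Unset Printing Implicit Defensive.
Import Order.TTheory GRing.Theory Num.Theory.
Local Open Scope ring_scope.
Local Open Scope ereal_scope.

(* T : measurable space Omega, mu : reference measure dy,
   Theta : parameter set (a type), f th y u = f_theta(y | u),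
   ys : nat -> T with ys 0 = y_0 (initial point) and ys 1 .. ys n the data. *)

Definition normconst d (T : measurableType d) (R : realType)
  (mu : {measure set T -> \bar R}) (Theta : Type)
  (f : Theta -> T -> T -> R) (th : Theta) (u : T) : \bar R :=
  \int[mu]_(y in setT) (expR (f th y u))%:E.

Definition loglik d (T : measurableType d) (R : realType)
  (mu : {measure set T -> \bar R}) (Theta : Type)
  (f : Theta -> T -> T -> R) (n : nat) (ys : nat -> T) (th : Theta) : R :=
  (\sum_(t < n) (f th (ys t.+1) (ys t) - ln (fine (normconst mu f th (ys t)))))%R.

Definition auxobj d (T : measurableType d) (R : realType)
  (mu : {measure set T -> \bar R}) (Theta : Type)
  (f : Theta -> T -> T -> R) (n : nat) (ys : nat -> T)
  (th : Theta) (nu : 'I_n -> R) : \bar R :=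
  (\sum_(t < n) (f th (ys t.+1) (ys t) + nu t))%R%:E
  - \int[mu]_(y in setT) (\sum_(t < n) expR (f th y (ys t) + nu t))%R%:E.

(* Main.v *)
Require Import Defs.
From HB Require Import structures.
From mathcomp Require Import all_boot all_order all_algebra.
From mathcomp Require Import all_classical all_reals all_analysis.
From mathcomp Require Import ring lra.
Import Order.TTheory GRing.Theory Num.Theory.
Local Open Scope ring_scope.
Local Open Scope ereal_scope.

Section Aux.
Variables (d : measure_display) (T : measurableType d) (R : realType)
  (mu : {measure set T -> \bar R}) (Theta : Type)
  (f : Theta -> T -> T -> R) (n : nat) (ys : nat -> T)
  (hmeas : forall th u, measurable_fun setT (fun y => f th y u))
  (hpos : forall th u, 0 < normconst mu f th u)
  (hfin : forall th u, normconst mu f th u < +oo).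

Let c th u := fine (normconst mu f th u).

Lemma c_gt0 th u : (0 < c th u)%R.
Proof.
have := hpos th u; have := hfin th u.
rewrite /c; case: (normconst mu f th u) => //= r _; by rewrite lte_fin.
Qed.

Lemma cE th u : normconst mu f th u = (c th u)%:E.
Proof.
have := hpos th u; have := hfin th u.
rewrite /c; by case: (normconst mu f th u).
Qed.

Lemma auxE th nu : auxobj mu f ys th nu =
  ((\sum_(t < n) (f th (ys t.+1) (ys t) + nu t))
   - \sum_(t < n) (expR (nu t) * c th (ys t)))%R%:E.
Proof.
rewrite /auxobj EFinB; congr (_ - _).
rewrite (_ : (fun y => _) = fun y => \sum_(t < n) (expR (f th y (ys t) + nu t))%:E); last first.
  by apply: boolp.funext => y; rewrite sumEFin.
rewrite ge0_integral_sum //; last first.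
  move=> t; apply/measurable_realfun.measurable_EFinP; apply: measurableT_comp => //.
  by apply: measurable_realfun.measurable_funD => //.
rewrite -sumEFin; apply: eq_bigr => t _.
rewrite (_ : (fun y => _) = fun y => (expR (nu t))%:E * (expR (f th y (ys t)))%:E); last first.
  by apply: boolp.funext => y; rewrite addrC expRD EFinM.
rewrite ge0_integralZl_EFin //.
- by rewrite EFinM -cE.
- by apply/measurable_realfun.measurable_EFinP; apply: measurableT_comp => //.
Qed.

Lemma key (nu c0 : R) : (0 < c0)%R -> (nu - expR nu * c0 <= - ln c0 - 1)%R.
Proof.
move=> c0p.
have := expR_ge1Dx (nu + ln c0).
rewrite expRD lnK ?posrE // => h.
rewrite mulrC; lra.
Qed.

Lemma key_eq (c0 : R) : (0 < c0)%R -> (- ln c0 - expR (- ln c0) * c0 = - ln c0 - 1)%R.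
Proof.
move=> c0p; rewrite expRN lnK ?posrE // mulVf ?gt_eqF // mulr1.
Qed.

Definition nustar th : 'I_n -> R := fun t => (- ln (c th (ys t)))%R.

Lemma aux_le th (nu : 'I_n -> R) : auxobj mu f ys th nu <=
  (loglik mu f n ys th - \sum_(t < n) 1)%R%:E.
Proof.
rewrite auxE lee_fin /loglik -!sumrB; apply: ler_sum => t _.
have := key (nu t) _ (c_gt0 th (ys t)); rewrite /c; lra.
Qed.

Lemma aux_eq th : auxobj mu f ys th (nustar th) =
  (loglik mu f n ys th - \sum_(t < n) 1)%R%:E.
Proof.
rewrite auxE /loglik -!sumrB; congr EFin; apply: eq_bigr => t _.
have := key_eq _ (c_gt0 th (ys t)); rewrite /nustar /c; lra.
Qed.

End Aux.


Theorem theorem2 (d : measure_display) (T : measurableType d) (R : realType)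
  (mu : {measure set T -> \bar R}) (Theta : Type)
  (f : Theta -> T -> T -> R) (n : nat) (ys : nat -> T)
  (hmeas : forall th u, measurable_fun setT (fun y => f th y u))
  (hpos : forall th u, 0 < normconst mu f th u)
  (hfin : forall th u, normconst mu f th u < +oo) :
  forall th : Theta,
    (forall th' : Theta, (loglik mu f n ys th' <= loglik mu f n ys th)%R) <->
    (exists nu : 'I_n -> R,
       forall (th' : Theta) (nu' : 'I_n -> R),
         auxobj mu f ys th' nu' <= auxobj mu f ys th nu).
Proof.
move=> th; split.
- move=> H; exists (nustar d T R mu Theta f n ys th) => th' nu'.
  apply: le_trans (@aux_le d T R mu Theta f n ys hmeas hpos hfin th' nu') _.
  rewrite (@aux_eq d T R mu Theta f n ys hmeas hpos hfin) lee_fin; move: (H th'); lra.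
- case=> nu H th'.
  have := H th' (nustar d T R mu Theta f n ys th'); rewrite (@aux_eq d T R mu Theta f n ys hmeas hpos hfin) => h.
  have := le_trans h (@aux_le d T R mu Theta f n ys hmeas hpos hfin th nu); rewrite lee_fin; lra.
Qed.
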